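(* Let $T_1$ be a quadtree in $\mathbb{R}^d$ with extended quadtree $T^*$, and let $\{C_i\in T^*\mid i\in[a,b]\}$ be a chain of length $k=b-a$. Then for every index $j$ with $j,j+1\in[a,b]$, the cells $C_j$ and $C_{j+1}$ are not family related.
   Context: A quadtree on an axis-aligned root hypercube $R\subset\mathbb{R}^d$ is a hierarchical decomposition in which every node has an associated axis-aligned hypercube (cell) and is either a leaf or has $2^d$ equal-sized children whose cells subdivide its cell. The size $|C|$ of a cell is its edge length. Two cells are neighbors if they are interior-disjoint and share (part of) a $(d-1)$-dimensional facet. Two cells $C_1,C_2$ with $|C_1|\le|C_2|$ are family related if the parent of $C_2$ is an ancestor of $C_1$. For an integer $j$, a cell $C$ is $2^j$-smooth if every leaf neighboring $C$ has size at most $2^j|C|$. Extended quadtree: the cells of $T_1$ get brand $1$. Recursively, for $j\ge1$, let $T^j$ be the quadtree formed by $\bigcup_{i\le j}T_i$, and let $T_{j+1}$ be the minimal set of cells obtained by splitting cells of $T^j$ such that every cell of $T_j$ is $2^j$-smooth in the resulting quadtree; the cells of $T_{j+1}$ get brand $j+1$. The extended quadtree is $T^*=T^{d+1}$. A chain of length $k=b-a$ in $T^*$ is an ordered set $\{C_i\in T^*\mid i\in[a,b]\}$ such that each $C_j$ has brand $j$ and, for each $j\in[a,b-1]$, $C_j$ neighbors $C_{j+1}$ and $|C_{j+1}|=2^j|C_j|$. *)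

(* Defs.v *)
From mathcomp Require Import all_boot.
Set Implicit Arguments. Unset Strict Implicit. Unset Printing Implicit Defensive.

(* The root hypercube R is normalised (by an affine map preserving all the
   notions involved) to [0,1]^d.  A cell of level l with integer coordinates
   x : 'I_d -> nat is the cube  prod_i [x_i 2^-l, (x_i+1) 2^-l];
   its size is 2^-l |R|.  It is a cell of the root iff x_i < 2^l for all i. *)
Definition cell (d : nat) := (nat * {ffun 'I_d -> nat})%type.

Section Cells.
Variable d : nat.
Implicit Types C A : cell d.

Definition lvl C : nat := C.1.
Definition pos C (i : 'I_d) : nat := C.2 i.

Definition valid_cell C : Prop := forall i, pos C i < 2 ^ lvl C.

Definition root_cell : cell d := (0, [ffun => 0]).

Definition parent C : cell d := ((lvl C).-1, [ffun i => pos C i %/ 2]).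

Definition ancestor A C : Prop :=
  lvl A <= lvl C /\ forall i, pos C i %/ 2 ^ (lvl C - lvl A) = pos A i.

(* endpoints of the i-th side of C, in units 2^-L (L >= lvl C) *)
Definition lo (L : nat) C i := pos C i * 2 ^ (L - lvl C).
Definition hi (L : nat) C i := (pos C i).+1 * 2 ^ (L - lvl C).

(* C1, C2 are interior-disjoint and share part of a (d-1)-dim facet:
   in one coordinate the sides touch at an endpoint, in all other
   coordinates the sides overlap in an interval of positive length. *)
Definition neighbors C1 C2 : Prop :=
  let L := maxn (lvl C1) (lvl C2) in
  exists i : 'I_d,
    (hi L C1 i = lo L C2 i \/ hi L C2 i = lo L C1 i) /\
    forall k : 'I_d, k != i -> lo L C1 k < hi L C2 k /\ lo L C2 k < hi L C1 k.

Definition family_related_ord C1 C2 : Prop :=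
  lvl C2 <= lvl C1 /\ 0 < lvl C2 /\ ancestor (parent C2) C1.

Definition family_related C1 C2 : Prop :=
  family_related_ord C1 C2 \/ family_related_ord C2 C1.

(* A quadtree: a finite set of cells of the root, containing the root,
   closed under parents, and in which every node is a leaf or has all its
   2^d children (i.e. siblings of a member are members). *)
Definition quadtree (T : cell d -> Prop) : Prop :=
  [/\ forall C, T C -> valid_cell C,
      T root_cell,
      forall C, T C -> 0 < lvl C -> T (parent C),
      forall C C', T C -> 0 < lvl C -> valid_cell C' -> lvl C' = lvl C ->
                   parent C' = parent C -> T C'
    & exists N, forall C, T C -> lvl C <= N].

Definition leaf (T : cell d -> Prop) C : Prop :=
  T C /\ forall C', T C' -> lvl C' = (lvl C).+1 -> parent C' <> C.

(* C is 2^j-smooth in T: every leaf L of T neighbouring C has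
   |L| <= 2^j |C|, i.e. lvl C <= lvl L + j. *)
Definition smooth (T : cell d -> Prop) (j : nat) C : Prop :=
  forall L : cell d, leaf T L -> neighbors L C -> lvl C <= lvl L + j.

Definition subtree (T T' : cell d -> Prop) : Prop := forall C, T C -> T' C.

Definition smooth_refinement (Told Tj : cell d -> Prop) (j : nat)
  (Q : cell d -> Prop) : Prop :=
  quadtree Q /\ subtree Told Q /\ forall C, Tj C -> smooth Q j C.

Definition minimal_smooth_refinement (Told Tj : cell d -> Prop) (j : nat)
  (Q : cell d -> Prop) : Prop :=
  smooth_refinement Told Tj j Q /\
  forall Q', smooth_refinement Told Tj j Q' -> subtree Q Q'.

Definition upto (Tb : nat -> cell d -> Prop) (j : nat) C : Prop :=
  exists2 i, 1 <= i <= j & Tb i C.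

(* Tb i = the set T_i of cells of brand i of the extended quadtree of T1
   (brands 1 .. d+1; T^* = upto Tb d.+1). *)
Definition extended_quadtree (T1 : cell d -> Prop) (Tb : nat -> cell d -> Prop)
  : Prop :=
  [/\ forall C, Tb 1 C <-> T1 C,
      forall i C, (i = 0 \/ d.+1 < i) -> ~ Tb i C
    & forall j, 1 <= j <= d ->
        exists Q, minimal_smooth_refinement (upto Tb j) (Tb j) j Q /\
          forall C, Tb j.+1 C <-> (Q C /\ ~ upto Tb j C)].

Definition chain (Tb : nat -> cell d -> Prop) (a b : nat) (Cs : nat -> cell d)
  : Prop :=
  a <= b /\
  (forall i, a <= i <= b -> Tb i (Cs i)) /\
  (forall j, a <= j < b ->
     neighbors (Cs j) (Cs j.+1) /\ lvl (Cs j) = lvl (Cs j.+1) + j).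

End Cells.

(* Main.v *)
Require Import Defs.
From mathcomp Require Import all_boot.
From mathcomp Require Import zify.
From Stdlib Require Import Classical.

Definition anc {d} (k : nat) (C : cell d) : cell d :=
  (lvl C - k, [ffun i => pos C i %/ 2 ^ k]).

Lemma anc0 d (C : cell d) : anc 0 C = C.
Proof.
case: C => l f; rewrite /anc /lvl /pos /= subn0; congr pair.
by apply/ffunP => i; rewrite ffunE expn0 divn1.
Qed.

Lemma parent_anc d k (C : cell d) : parent (anc k C) = anc k.+1 C.
Proof.
rewrite /parent /anc /lvl /pos /=; congr pair; first by rewrite subnS.
by apply/ffunP => i; rewrite !ffunE expnS mulnC divnMA.
Qed.

Lemma anc_in d (T : cell d -> Prop) (C : cell d) k :
  quadtree T -> T C -> k <= lvl C -> T (anc k C).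
Proof.
move=> [_ _ Hp _ _] HC; elim: k => [|k IH] Hk; first by rewrite anc0.
rewrite -parent_anc; apply: Hp; first by apply: IH; lia.
rewrite /anc /lvl /=; rewrite /lvl in Hk; lia.
Qed.

Lemma quadtree_ext d (P P' : cell d -> Prop) :
  (forall C, P C <-> P' C) -> quadtree P -> quadtree P'.
Proof.
move=> E [H1 H2 H3 H4 [N H5]]; split.
- by move=> C /E; apply: H1.
- by apply/E.
- by move=> C /E HC Hl; apply/E; apply: H3.
- by move=> C C' /E HC Hl Hv Hl' Hp; apply/E; apply: (H4 C).
- by exists N => C /E; apply: H5.
Qed.

Theorem lemma25 (d : nat) (T1 : cell d -> Prop) (Tb : nat -> cell d -> Prop)
  (a b : nat) (Cs : nat -> cell d) :
  quadtree T1 -> extended_quadtree T1 Tb -> chain Tb a b Cs ->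
  forall j, a <= j -> j.+1 <= b -> ~ family_related (Cs j) (Cs j.+1).
Proof.
move=> HT1 [Hb1 Hb0 Hbs] [_ [Hin Hch]] j Haj Hjb.
have Tj : Tb j (Cs j) by apply: Hin; lia.
have Tj1 : Tb j.+1 (Cs j.+1) by apply: Hin; lia.
have [_ Hlv] : neighbors (Cs j) (Cs j.+1) /\ lvl (Cs j) = lvl (Cs j.+1) + j
  by apply: Hch; lia.
have j1 : 1 <= j.
  case: j Tj {Haj Hjb Tj1 Hlv} => // Tj; exfalso; apply: (Hb0 0 _ _ Tj); by left.
have jd : j <= d.
  case: (leqP j d) => // H; exfalso; apply: (Hb0 j.+1 _ _ Tj1); right; lia.
have Hup : quadtree (upto Tb j).
  case: j Haj Hjb Tj Tj1 Hlv j1 jd => [//|j'] _ _ _ _ _ _ jd.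
  case: (posnP j') => [->|j'pos].
    apply: (@quadtree_ext _ T1) => // C; split.
      by move=> HC; exists 1 => //; apply/Hb1.
    case=> i /andP[Hi1 Hi2] HC; have Ei : i = 1 by (lia).
    by subst i; apply/Hb1.
  have hj' : 0 < j' <= d by lia.
  have [Q [[[HQ [Hsub _]] _] EQ]] := Hbs j' hj'.
  apply: (@quadtree_ext _ Q) => // C; split.
    move=> HC; case: (classic (upto Tb j' C)) => [[i Hi Hc]|Hn].
      by exists i => //; lia.
    exists j'.+1; first by lia.
    by apply/EQ.
  case=> i /andP[Hi1 Hi2] HC; case: (leqP i j') => Hij.
    by apply: Hsub; exists i => //; lia.
  have Ei : i = j'.+1 by lia.
  by subst i; case/EQ: HC.
have hj : 0 < j <= d by lia.
have [Q [[[HQ [Hsub _]] _] EQ]] := Hbs j hj.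
have [QC Nup] := (EQ (Cs j.+1)).1 Tj1.
have Hupj : upto Tb j (Cs j) by exists j => //; lia.
case; last by case=> H _; lia.
case=> _ [Hpos [Hal Hanc]].
have hjl : j <= lvl (Cs j) by lia.
have S_in := @anc_in _ _ _ _ Hup Hupj hjl.
apply: Nup.
case: Hup => _ _ _ Hsib _.
apply: (Hsib _ _ S_in).
- rewrite /anc /lvl /=; rewrite /lvl in Hpos Hlv; lia.
- by case: HQ => Hv _ _ _ _; apply: Hv.
- rewrite /anc /lvl /=; rewrite /lvl in Hlv; lia.
- rewrite parent_anc /anc /parent; congr pair.
    rewrite /lvl in Hlv *; lia.
  apply/ffunP => i; rewrite !ffunE.
  have <- : pos (parent (Cs j.+1)) i = pos (Cs j.+1) i %/ 2 by rewrite /pos /parent /= ffunE.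
  rewrite -Hanc; congr (_ %/ 2 ^ _).
  rewrite /parent /lvl /= in Hlv Hpos *; lia.
Qed.
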